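(* The class $\mathcal D$ of continua $X$ that are $d(X)$-Baire is a bloom class: if $X\in\mathcal D$ and $K\subset X$ is a subcontinuum, then the quotient $X/K$ is $d(X/K)$-Baire.
   Context: A continuum is a nondegenerate compact connected Hausdorff space. $d(X)$ is the least cardinality of a dense subset of $X$; $X$ is $\alpha$-Baire if every family of $\alpha$ many open dense subsets has dense intersection. For a subcontinuum $K\subset X$, the $K$-bloom is the canonical quotient map $X\to X/K$ collapsing $K$ to a single point. A class of continua is a bloom class if it is closed under blooms. *)

(* Defs.v *)
From HB Require Import structures.
From mathcomp Require Import all_boot all_order generic_quotient.
From mathcomp Require Import all_classical all_reals all_analysis.
Set Implicit Arguments. Unset Strict Implicit. Unset Printing Implicit Defensive.
Local Open Scope classical_set_scope.
Local Open Scope quotient_scope.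

Definition continuum (X : topologicalType) : Prop :=
  (exists x y : X, x <> y) /\ compact [set: X] /\ connected [set: X]
  /\ hausdorff_space X.

(* A subcontinuum of X: a subset which is a nondegenerate compact connected
   set (Hausdorffness is inherited from X). *)
Definition subcontinuum (X : topologicalType) (K : set X) : Prop :=
  (exists x y, K x /\ K y /\ x <> y) /\ compact K /\ connected K.

(* D is a dense subset of X of least cardinality, i.e. #|D| = d(X). *)
Definition min_dense (X : topologicalType) (D : set X) : Prop :=
  dense D /\ forall E : set X, dense E -> (D #<= E)%card.

(* X is d(X)-Baire: every family of d(X) many open dense subsets of X
   (indexed by a dense set D of cardinality d(X)) has dense intersection. *)
Definition density_Baire (X : topologicalType) : Prop :=
  forall D : set X, min_dense D ->
  forall U : X -> set X, (forall i, D i -> open (U i) /\ dense (U i)) ->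
  dense (\bigcap_(i in D) U i).

Definition bloom_rel (X : topologicalType) (K : set X) : rel X :=
  fun x y => `[< x = y \/ (K x /\ K y) >].

Lemma bloom_rel_refl (X : topologicalType) (K : set X) : reflexive (bloom_rel K).
Proof. by move=> x; apply/asboolP; left. Qed.

Lemma bloom_rel_sym (X : topologicalType) (K : set X) : symmetric (bloom_rel K).
Proof.
move=> x y; apply/asboolP/asboolP => -[->|[? ?]]; by [left|right].
Qed.

Lemma bloom_rel_trans (X : topologicalType) (K : set X) : transitive (bloom_rel K).
Proof.
move=> y x z /asboolP[->|[Kx Ky]] /asboolP[<-|[Ky' Kz]]; apply/asboolP;
  by [left|right].
Qed.

Definition bloom_equiv (X : topologicalType) (K : set X) : equiv_rel X :=
  EquivRel (bloom_rel K) (@bloom_rel_refl X K) (@bloom_rel_sym X K)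
    (@bloom_rel_trans X K).

Definition bloom (X : topologicalType) (K : set X) : topologicalType :=
  quotient_topology {eq_quot (bloom_equiv K)}.

(* Main.v *)
Require Import Defs.
From HB Require Import structures.
From mathcomp Require Import all_boot all_order generic_quotient.
From mathcomp Require Import all_classical all_reals all_analysis.
Local Open Scope classical_set_scope.
Local Open Scope quotient_scope.

Section S.
Variables (X : topologicalType) (K : set X).
Local Notation Y := (bloom K).
Local Notation pi := (\pi_Y : X -> Y).

Lemma piE x y : pi x = pi y <-> (x = y \/ (K x /\ K y)).
Proof.
have H : pi x = pi y <-> x = y %[mod_eq bloom_equiv K] by [].
rewrite H; split.
- by move/eqmodP/asboolP.
- by move=> h; apply/eqmodP; exact/asboolP.
Qed.

Lemma pi_surj (y : Y) : exists x, pi x = y.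
Proof. exists (repr y). exact: reprK. Qed.

Lemma openY (U : set Y) : open U <-> open (pi @^-1` U).
Proof. by []. Qed.

Lemma dense_U (V : set Y) : closed K -> open V -> dense V ->
  dense (pi @^-1` V `|` interior K).
Proof.
move=> Kcl oV dV W [w0 Ww0] oW.
have [WK|] := pselect (W `<=` K).
  by exists w0; split => //; right; move: WK; rewrite open_subsetE //; apply.
move=> /existsNP[w /not_implyP[Ww nKw]].
have oWK : open (W `\` K) by apply: openI => //; exact: closed_openC.
have preO : pi @^-1` (pi @` (W `\` K)) = W `\` K.
  apply/seteqP; split => z /=; last by move=> h; exists z.
  by move=> [z' [Wz' nKz'] /piE [<-//|[]//]].
have [_ [[z' [Wz' _] <-] Vz']] := dV (pi @` (W `\` K)) (ex_intro _ (pi w) (ex_intro2 _ _ w (conj Ww nKw) erefl)) (eq_ind_r open oWK preO).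
by exists z'; split => //; left.
Qed.
Lemma card_min (T : Type) (P : set (set T)) : P !=set0 ->
  exists A, P A /\ forall B, P B -> (A #<= B)%card.
Proof.
move=> [A0 PA0].
have [[A [PA eA]]|hne] := pselect (exists A, P A /\ A = set0).
  by exists A; split => // B _; rewrite eA; exact: card_ge0.
have ne : forall A, P A -> exists a, A a.
  move=> A PA; apply: contrapT => nA; apply: hne; exists A; split => //.
  by apply/seteqP; split => // x Ax; apply: nA; exists x.
have [a0 _] := ne _ PA0.
pose tup (s : set T -> T) := forall E, P E -> E (s E).
pose Z := fun (S : set (set T -> T)) => (forall s, S s -> tup s) /\
  (forall s t, S s -> S t -> s <> t -> forall E, P E -> s E <> t E).
have [S [[ZS1 ZS2] Smax]] : exists S, Z S /\ forall B, S `<` B -> ~ Z B.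
  apply: Zorn_bigcup => F FZ Ftot; split.
    by move=> s [A FA As]; exact: (FZ A FA).1.
  move=> s t [A FA As] [B FB Bt]; have [AB|BA] := Ftot _ _ FA FB.
    by apply: (FZ B FB).2 => //; exact: AB.
  by apply: (FZ A FA).2 => //; exact: BA.
have [E0 [PE0 E0S]] : exists E0, P E0 /\ forall a, E0 a -> exists s, S s /\ s E0 = a.
  apply: contrapT => hn.
  have hc : forall E, exists a, P E -> E a /\ forall s, S s -> s E <> a.
    move=> E; have [PE|nPE] := pselect (P E); last by exists a0.
    have : ~ (forall a, E a -> exists s, S s /\ s E = a).
      by move=> h; apply: hn; exists E.
    move=> /existsNP[a /not_implyP[Ea /forallNP ha]].
    exists a => _; split => // s Ss sEa; apply: (ha s); split => //.
  have [t ht] := choice hc.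
  have tS : ~ S t by move=> St; have [_ /(_ t St)] := ht A0 PA0.
  apply: (Smax (S `|` [set t])).
    split; first by move=> s Ss; left.
    by move=> /(_ t (or_intror erefl)).
  split.
    by move=> s [/ZS1//|->] E PE; have [] := ht E PE.
  move=> s u [Ss|->] [Su|->] su E PE.
  - exact: ZS2.
  - by have [_ /(_ s Ss)] := ht E PE.
  - by have [_ /(_ u Su) h] := ht E PE => eq; apply: h; rewrite eq.
  - by [].
exists E0; split => // B PB.
have hc : forall a, exists s, E0 a -> S s /\ s E0 = a.
  move=> a; have [Ea|nEa] := pselect (E0 a); last by exists (fun _ => a).
  by have [s hs] := E0S a Ea; exists s.
have [g hg] := choice hc.
have : $|{injfun E0 >-> B}|.
  apply/injfunPex; exists (fun a => g a B).
    by move=> a Ea; have [/ZS1 + _] := hg a Ea; apply.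
  move=> a b /[!inE] Ea Eb gab.
  have [Sa ga] := hg a Ea; have [Sb gb] := hg b Eb.
  have gg : g a = g b.
    by apply: contrapT => nab; exact: (ZS2 _ _ Sa Sb nab B PB gab).
  by rewrite -ga -gb gg.
by case=> f; exact: inj_card_le.
Qed.
End S.

Theorem mainTheorem7 (X : topologicalType) (K : set X) :
  continuum X -> density_Baire X -> subcontinuum K ->
  density_Baire (bloom K).
Proof.
move=> [_ [_ [_ hX]]] BX [_ [cK _]] DY [dDY minDY] V hV.
have Kcl : closed K := compact_closed hX cK.
pose pi := (\pi_(bloom K) : X -> bloom K).
have [DX [dDX minDX]] : exists DX : set X, dense DX /\ forall E : set X, dense E -> (DX #<= E)%card.
  apply: (@card_min _ [set E : set X | dense E]).
  by exists setT; move=> Q [q Qq] _; exists q.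

have DYDX : (DY #<= DX)%card.
  suff h1 : (DY #<= pi @` DX)%card by exact: card_le_trans h1 (card_image_le _ _).
  apply: minDY.
  move=> O [y Oy] oO; have [x px] := @pi_surj _ K y.
  have oPO : open (pi @^-1` O) by [].
  have [z [Oz DXz]] := dDX _ (ex_intro _ x (eq_ind_r O Oy px)) oPO.
  by exists (pi z); split => //; exists z.
pose W i := pi @^-1` V i `|` interior K.
have dW : dense (\bigcap_(i in DY) W i).
  have [DY0|[g]] := pfcard_geP DYDX.
    by rewrite DY0 bigcap_set0; move=> Q [q Qq] _; exists q.
  have hU : forall x, DX x -> open (W (g x)) /\ dense (W (g x)).
    move=> x DXx; have [oV dV] := hV _ ('funS_g DXx); split.
      by apply: openU => //; exact: open_interior.
    exact: (@dense_U _ K (V (g x)) Kcl oV dV).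
  have := BX DX (conj dDX minDX) (fun x => W (g x)) hU.
  move=> dI Q Q0 oQ; have [z [Qz Iz]] := dI Q Q0 oQ.
  exists z; split => // i DYi; have [x DXx <-] := 'surj_g DYi.
  exact: Iz.
move=> O [y Oy] oO.
have [[x [Ox nKx]]|hK] := pselect (exists x, O (pi x) /\ ~ K x).
  have oOK : open (pi @^-1` O `\` K) by apply: openI => //; exact: closed_openC.
  have [z [[Oz nKz] Iz]] := dW _ (ex_intro _ x (conj Ox nKx)) oOK.
  exists (pi z); split => // i DYi; have [] := Iz i DYi => // /interior_subset //.
have [x px] := @pi_surj _ K y.
have Kx : K x.
  by apply: contrapT => nKx; apply: hK; exists x; split => //; rewrite /pi px.
exists y; split => // i DYi.
have [oV dV] := hV i DYi.
have [z [Oz Vz]] := dV O (ex_intro _ y Oy) oO.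
have [x' px'] := @pi_surj _ K z.
have Kx' : K x'.
  by apply: contrapT => nKx; apply: hK; exists x'; split => //; rewrite /pi px'.
rewrite -px -(proj2 (@piE _ K x' x) (or_intror (conj Kx' Kx))) px'.
exact: Vz.
Qed.
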